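(* Let $Q$ be a non-negative matrix on a countable set $S$ with finite Green's function and let $\nu$ be a $Q$-excessive measure with one-sided Kuznetsov measure $\mathcal K^\nu$. For every measurable set $A\subset\mathcal W$, $n\in\mathbb N$, $B\subset S^{n+1}$ and $x\in S$, $$\mathcal K^\nu\big((X_{m-n})_{m\in-\mathbb N_0}\in A,\ X_{-n}=x,\ (X_{-n},\dots,X_0)\in B\big)=\mathcal K^\nu(A\cap\{X_0=x\})\,\mathcal Q^x_n(B).$$
   Context: $Q=(q_{x,y})_{x,y\in S}$ non-negative with $G=\sum_{n\ge0}Q^n$ finite entrywise. A measure $\nu$ on $S$ finite at every point is $Q$-excessive if $\sum_y\nu(y)q_{y,x}\le\nu(x)$ for all $x$; $\nu^{\mathrm{pot}}(x)=\nu(x)-\sum_y\nu(y)q_{y,x}$. $\mathcal W$ is the set of sequences $(x_n)_{n\in-\mathbb N_0}\in(S\cup\{\partial\})^{-\mathbb N_0}$ ($\partial\notin S$) for which some $\alpha\in-\mathbb N_0\cup\{-\infty\}$ satisfies $x_n\in S\iff\alpha\le n$; $X_n$ are the coordinates; product σ-field. The one-sided Kuznetsov measure $\mathcal K^\nu$ is the measure on $\mathcal W$ with $\mathcal K^\nu(\{(\dots,\partial,x_{-k},\dots,x_0)\})=\nu^{\mathrm{pot}}(x_{-k})q_{x_{-k},x_{-k+1}}\cdots q_{x_{-1},x_0}$ and $\mathcal K^\nu(X_{-k}=x_{-k},\dots,X_0=x_0)=\nu(x_{-k})q_{x_{-k},x_{-k+1}}\cdots q_{x_{-1},x_0}$ for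 all $k\in\mathbb N$, $x_{-k},\dots,x_0\in S$. For $x\in S$ and $n\in\mathbb N_0$, $\mathcal Q^x_n$ is the measure on $S^{n+1}$ with $\mathcal Q^x_n(\{(x_0,\dots,x_n)\})=\mathbf 1_{\{x=x_0\}}q_{x_0,x_1}\cdots q_{x_{n-1},x_n}$. *)

(* Defs.v *)
From HB Require Import structures.
From mathcomp Require Import all_boot all_order all_algebra.
From mathcomp Require Import all_classical all_reals all_analysis.
Set Implicit Arguments. Unset Strict Implicit. Unset Printing Implicit Defensive.
Import Order.TTheory GRing.Theory Num.Theory.
Local Open Scope classical_set_scope.
Local Open Scope ring_scope.
Local Open Scope ereal_scope.

(* Paths: a path w : nat -> option S encodes (x_n)_{n in -N_0} via
   w k = X_{-k}, with None standing for the cemetery point \partial. *)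
Definition path (S : Type) := nat -> option S.

(* The set W of admissible paths: there is alpha in -N_0 \cup {-oo} with
   x_n in S <-> alpha <= n.  In the index k = -n this means: either all
   coordinates are in S (alpha = -oo), or there is a (= -alpha) with
   X_{-k} in S <-> k <= a. *)
Definition Wset (S : Type) : set (path S) :=
  [set w | (forall k, w k <> None) \/
           exists a : nat, forall k, w k <> None <-> (k <= a)%N].

Definition cyl (S : Type) : set (set (path S)) :=
  [set C | exists k (b : option S), C = [set w : path S | w k = b]].

Definition Paths (S : Type) := g_sigma_algebraType (@cyl S).

Definition X (S : Type) (k : nat) (w : Paths S) : option S := w k.

(* Time shift: (X_{m-n})_{m in -N_0}. *)
Definition shiftp (S : Type) (n : nat) (w : Paths S) : Paths S :=
  fun k => w (k + n)%N.

Fixpoint Qpow (R : realType) (S : choiceType) (q : S -> S -> R) (n : nat)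
  (x y : S) : \bar R :=
  match n with
  | O => (if `[< x = y >] then 1 else 0)%:E
  | n'.+1 => \esum_(z in [set: S]) (Qpow q n' x z * (q z y)%:E)
  end.

Definition green (R : realType) (S : choiceType) (q : S -> S -> R) (x y : S)
  : \bar R := \sum_(0 <= n <oo) Qpow q n x y.

Definition nuQ (R : realType) (S : choiceType) (q : S -> S -> R) (nu : S -> R)
  (x : S) : \bar R := \esum_(y in [set: S]) ((nu y)%:E * (q y x)%:E).

Definition excessive (R : realType) (S : choiceType) (q : S -> S -> R)
  (nu : S -> R) : Prop :=
  (forall x, 0 <= nu x)%R /\ forall x, nuQ q nu x <= (nu x)%:E.

Definition nupot (R : realType) (S : choiceType) (q : S -> S -> R) (nu : S -> R)
  (x : S) : \bar R := (nu x)%:E - nuQ q nu x.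

(* The product q_{x_{-k},x_{-k+1}} ... q_{x_{-1},x_0} where f i = x_{-i}. *)
Definition pathprod (R : realType) (S : Type) (q : S -> S -> R)
  (k : nat) (f : nat -> S) : R := (\prod_(i < k) q (f i.+1) (f i))%R.

Definition is_kuznetsov (R : realType) (S : choiceType) (q : S -> S -> R)
  (nu : S -> R) (K : set (Paths S) -> \bar R) : Prop :=
  (forall (k : nat) (f : nat -> S),
      K (@Wset S `&` [set w | (forall i, (i <= k)%N -> X i w = Some (f i))
                              /\ X k.+1 w = None])
      = nupot q nu (f k) * (pathprod q k f)%:E) /\
  (forall (k : nat) (f : nat -> S),
      K (@Wset S `&` [set w | forall i, (i <= k)%N -> X i w = Some (f i)])
      = (nu (f k))%:E * (pathprod q k f)%:E).

Definition Qxn (R : realType) (S : choiceType) (q : S -> S -> R) (x : S) (n : nat)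
  (B : set ('I_n.+1 -> S)) : \bar R :=
  \esum_(t in B)
    (if `[< t ord0 = x >] then
       (\prod_(i < n) q (t (inord i)) (t (inord i.+1)))%:E
     else 0).

(* Main.v *)
Require Import Defs.
From HB Require Import structures.
From mathcomp Require Import all_boot all_order all_algebra.
From mathcomp Require Import all_classical all_reals all_analysis.
From mathcomp Require Import zify.
Import Order.TTheory GRing.Theory Num.Theory.
Local Open Scope classical_set_scope.
Local Open Scope ring_scope.
Local Open Scope ereal_scope.
Section Paths.
Context {S : countType}.
Local Notation P := (Paths S).

Definition Pre (k : nat) (b : nat -> option S) : set P :=
  [set w : P | forall i, (i <= k)%N -> w i = b i].

Definition Gs : set (set P) :=
  [set A | A = setT \/ A = set0 \/ exists k b, A = Pre k b].

Lemma cyl_meas k c : measurable [set w : P | w k = c].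
Proof. by apply: sub_sigma_algebra; exists k, c. Qed.

Lemma Pre_meas k b : measurable (Pre k b).
Proof.
elim: k => [|k IH].
  rewrite (_ : Pre 0 b = [set w : P | w 0%N = b 0%N]); first exact: cyl_meas.
  by apply/seteqP; split => w /= h; [exact: h|move=> [|i]//= _].
rewrite (_ : Pre k.+1 b = Pre k b `&` [set w : P | w k.+1 = b k.+1]).
  by apply: measurableI => //; exact: cyl_meas.
apply/seteqP; split => w /=.
  by move=> h; split; [move=> i ik; apply: h; rewrite (leq_trans ik)|exact: h].
by move=> [h1 h2] i; rewrite leq_eqVlt => /orP[/eqP ->//|]; rewrite ltnS; exact: h1.
Qed.

Lemma mG : (@measurable _ P) = <<s Gs >>.
Proof.
apply/seteqP; split.
  apply: smallest_sub; first exact: smallest_sigma_algebra.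
  move=> _ [k [c ->]].
  pose bs (s : seq (option S)) i := if (i < k)%N then nth None s i else c.
  have -> : [set w : P | w k = c] = \bigcup_(s : seq (option S)) Pre k (bs s).
    apply/seteqP; split => w /=.
      move=> wk; exists (mkseq w k) => // i ik; rewrite /bs.
      case: ltnP => ik'; first by rewrite nth_mkseq.
      by have -> : i = k by apply/eqP; rewrite eqn_leq ik.
    by move=> [s _ h]; rewrite h // /bs ltnn.
  apply: (@countable_bigcupT_measurable _ (g_sigma_algebraType Gs)).
    exact: countableP.
  move=> s; apply: sub_sigma_algebra; right; right; by exists k, (bs s).
apply: smallest_sub; first exact: sigma_algebra_measurable.
move=> A [->|[->|[k [b ->]]]] //; exact: Pre_meas.
Qed.

Lemma PreI_le k k' b b' : (k <= k')%N -> Gs (Pre k b `&` Pre k' b').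
Proof.
move=> kk; have [h|h] := pselect (forall i, (i <= k)%N -> b i = b' i).
  right; right; exists k', b'; apply/seteqP; split => w /=; first by case.
  move=> H; split => // i ik; rewrite h // H //; exact: leq_trans kk.
right; left; apply/seteqP; split => // w /= [h1 h2]; apply: h => i ik.
by rewrite -h1 // h2 // (leq_trans ik).
Qed.

Lemma GsI : setI_closed Gs.
Proof.
move=> A B [->|[->|[k [b ->]]]] [->|[->|[k' [b' ->]]]];
  rewrite ?setTI ?setIT ?set0I ?setI0; try by [left|right;left].
- by right; right; exists k', b'.
- by right; right; exists k, b.
- case: (leqP k k') => kk; first exact: PreI_le.
  by rewrite setIC; apply: PreI_le; exact: ltnW.
Qed.

Definition W : set P := @Wset S.

Lemma W_meas : measurable W.
Proof.
pose C k := [set w : P | w k = None].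
have -> : W = (\bigcap_k ~` C k) `|`
    \bigcup_a \bigcap_k (if (k <= a)%N then ~` C k else C k).
  apply/seteqP; split => w.
    case=> [h|[a h]]; [left|right] => //.
      by move=> k _ /= wk; exact: (h k).
    exists a => // k _; case: ifPn => ka /=.
      by move/h: ka.
    case E: (w k) => [s|]//; have := proj1 (h k); rewrite E (negbTE ka).
    by move=> /(_ ltac:(discriminate)).
  case=> [h|[a _ h]]; [left => k wk; exact: (h k I wk)|right; exists a => k].
  have := h k I; case: ifPn => ka /= hk.
    by split => // _.
  by split => // wk; rewrite hk in wk.
apply: measurableU.
  by apply: bigcapT_measurable => k; apply: measurableC; exact: cyl_meas.
apply: bigcupT_measurable => a; apply: bigcapT_measurable => k.
by case: ifP => _; [apply: measurableC|]; exact: cyl_meas.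
Qed.

End Paths.
Section Paths2.
Context {S : countType}.
Local Notation P := (Paths S).
Local Notation W := (@W S).

Lemma W_none (w : P) j i : W w -> w j = None -> (j <= i)%N -> w i = None.
Proof.
case=> [h|[a h]] wj ji; first by exfalso; exact: (h j).
case E: (w i) => [s|]//.
have /(proj1 (h i)) : w i <> None by rewrite E.
have : ~ (j <= a)%N by move=> /(proj2 (h j)); rewrite wj.
by move=> /negP; rewrite -ltnNge => aj ia; move: (leq_ltn_trans ia (leq_trans aj ji)); rewrite ltnn.
Qed.

Lemma W_shift n (w : P) : W w -> w n <> None -> W (shiftp n w).
Proof.
case=> [h|[a h]] wn; first by left => k; exact: h.
have na : (n <= a)%N := proj1 (h n) wn.
right; exists (a - n)%N => k; rewrite /shiftp; split.
  move=> hk; have := proj1 (h (k + n)%N) hk; lia.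
move=> ka; apply: (proj2 (h (k + n)%N)); lia.
Qed.

Lemma W_ext n (w : P) : W (shiftp n w) -> (forall i, (i <= n)%N -> w i <> None) -> W w.
Proof.
rewrite /shiftp; case=> [h|[a h]] hn.
  left => k; case: (leqP k n) => kn; first exact: hn.
  by rewrite -(subnK (ltnW kn)); exact: h.
right; exists (a + n)%N => k; case: (leqP k n) => kn.
  by split => [_|_]; [lia|exact: hn].
rewrite -(subnK (ltnW kn)) leq_add2r; exact: h.
Qed.

Lemma W_some0 (w : P) : W w -> w 0%N <> None.
Proof. by case=> [h|[a h]]; [exact: h|exact/(proj2 (h 0%N))]. Qed.

Lemma shift_meas n : measurable_fun setT (shiftp n : P -> P).
Proof.
apply: (@measurability _ _ P P setT (shiftp n) (@cyl S) erefl).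
move=> _ [_ [k [c ->]] <-]; rewrite setTI.
have -> : shiftp n @^-1` [set w : P | w k = c] = [set w : P | w (k + n)%N = c] by [].
exact: (@cyl_meas S (k + n)%N c).
Qed.

Lemma classify k b : W `&` Pre k b = set0 \/
  (exists f : nat -> S, forall i, (i <= k)%N -> b i = Some (f i)) \/
  (exists j (f : nat -> S), [/\ (j < k)%N, (forall i, (i <= j)%N -> b i = Some (f i)) &
      (forall i, (j < i)%N -> (i <= k)%N -> b i = None)]).
Proof.
have [->|/set0P[w [Ww Pw]]] := eqVneq (W `&` Pre k b) set0; first by left.
right; case E0: (w 0%N) => [s0|]; last by exfalso; exact: (@W_some0 w Ww E0).
pose f i := odflt s0 (w i).
have wf i : w i <> None -> w i = Some (f i) by rewrite /f; case: (w i).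
case: (Ww) => [h|[a h]].
  by left; exists f => i ik; rewrite -Pw// wf.
case: (leqP k a) => ka.
  left; exists f => i ik; rewrite -Pw// wf//; apply: (proj2 (h i)); lia.
right; exists a, f; split => //.
  move=> i ia; rewrite -Pw; last by lia.
  by apply: wf; apply: (proj2 (h i)).
move=> i ai ik; rewrite -Pw//.
case E: (w i) => [s|]//.
have : w i <> None by rewrite E.
move=> /(proj1 (h i)); lia.
Qed.

End Paths2.
Section Kcomp.
Variables (R : realType) (S : countType) (q : S -> S -> R) (nu : S -> R)
  (K : {measure set (Paths S) -> \bar R}) (hK : is_kuznetsov q nu K).
Local Notation P := (Paths S).
Local Notation W := (@W S).

Lemma KPre_a k b (f : nat -> S) : (forall i, (i <= k)%N -> b i = Some (f i)) ->
  K (W `&` Pre k b) = (nu (f k))%:E * (pathprod q k f)%:E.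
Proof.
move=> hb; rewrite -(proj2 hK k f); congr (K _); apply/seteqP; split => w /= [Ww h].
  by split => // i ik; rewrite /X h ?hb.
by split => // i ik; rewrite hb //; exact: h.
Qed.

Lemma KPre_b k b j (f : nat -> S) : (j < k)%N ->
  (forall i, (i <= j)%N -> b i = Some (f i)) ->
  (forall i, (j < i)%N -> (i <= k)%N -> b i = None) ->
  K (W `&` Pre k b) = nupot q nu (f j) * (pathprod q j f)%:E.
Proof.
move=> jk hb1 hb2; rewrite -(proj1 hK j f); congr (K _); apply/seteqP; split => w /= [Ww h].
  split => //; split; first by move=> i ij; rewrite /X h ?hb1// (leq_trans ij (ltnW jk)).
  by rewrite /X h ?hb2.
split => // i ik; case: (leqP i j) => ij; first by rewrite hb1 // -(proj1 h).
by rewrite hb2 //; apply: (W_none _ _ _ Ww (proj2 h)).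
Qed.

Definition catb n (u : nat -> S) (b : nat -> option S) i :=
  if (i < n)%N then Some (u i) else b (i - n)%N.

Lemma pathprod_cat n k (u f : nat -> S) : f 0%N = u n ->
  pathprod q (n + k) (fun i => if (i < n)%N then u i else f (i - n)%N) =
  (pathprod q n u * pathprod q k f)%R.
Proof.
move=> f0; rewrite /pathprod big_split_ord /=; congr (_ * _)%R.
  apply: eq_bigr => i _ /=; rewrite ltn_ord; case: ltnP => ii.
    by [].
  have -> : i.+1 = n by apply/eqP; rewrite eqn_leq ii ltn_ord.
  by rewrite subnn f0.
apply: eq_bigr => i _ /=.
have -> : ((n + i).+1 < n)%N = false by lia.
have -> : (n + i < n)%N = false by lia.
by rewrite -addnS !addKn.
Qed.

Lemma key n (u : nat -> S) k b : b 0%N = Some (u n) ->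
  K (W `&` Pre (n + k) (catb n u b)) = (pathprod q n u)%:E * K (W `&` Pre k b).
Proof.
move=> b0.
pose g (f : nat -> S) i := if (i < n)%N then u i else f (i - n)%N.
have hsub : W `&` Pre (n + k) (catb n u b) `<=` shiftp n @^-1` (W `&` Pre k b).
  move=> w [Ww Pw]; split.
    apply: W_shift => //; rewrite Pw ?leq_addr// /catb ltnn subnn b0 //.
  move=> i ik; rewrite /shiftp Pw; last by rewrite addnC leq_add2l.
  by rewrite /catb ltnNge leq_addl /= addnK.
case: (classify k b) => [E|[[f hf]|[j [f [jk hf1 hf2]]]]].
- rewrite E measure0 mule0.
  have -> : W `&` Pre (n + k) (catb n u b) = set0.
    apply/seteqP; split => // w /hsub H.
    by have : (W `&` Pre k b) (shiftp n w) := H; rewrite E.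
  exact: measure0.
- have f0 : f 0%N = u n by have := hf 0%N (leq0n _); rewrite b0 => -[].
  rewrite (@KPre_a k b f hf) (@KPre_a (n + k) (catb n u b) (g f)); last first.
    move=> i ik; rewrite /catb /g; case: ltnP => // ni.
    by rewrite hf // leq_subLR.
  rewrite /g ltnNge leq_addr /= addKn pathprod_cat // EFinM.
  by rewrite muleCA.
- have f0 : f 0%N = u n by have := hf1 0%N (leq0n _); rewrite b0 => -[].
  rewrite (@KPre_b k b j f jk hf1 hf2) (@KPre_b (n + k) (catb n u b) (n + j) (g f)).
  + rewrite /g ltnNge leq_addr /= addKn pathprod_cat // EFinM.
    by rewrite muleCA.
  + by rewrite ltn_add2l.
  + move=> i ik; rewrite /catb /g; case: ltnP => // ni.
    by rewrite hf1 // leq_subLR.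
  + move=> i ji ik; rewrite /catb.
    have ni : (n <= i)%N by apply: leq_trans (ltnW ji); rewrite leq_addr.
    rewrite ltnNge ni /= hf2 //; first by rewrite ltn_subRL.
    by rewrite leq_subLR.
Qed.

End Kcomp.
Section Mgen.
Variables (R : realType) (S : countType) (K : {measure set (Paths S) -> \bar R}).
Local Notation P := (Paths S).

Definition mgen (D : set P) (mD : measurable D) (f : P -> P)
  (mf : measurable_fun setT f) (c : R) (c0 : (0 <= c)%R) : set P -> \bar R :=
  fun A => c%:E * K (D `&` f @^-1` A).

Variables (D : set P) (mD : measurable D) (f : P -> P)
  (mf : measurable_fun setT f) (c : R) (c0 : (0 <= c)%R).

Local Notation mu := (@mgen D mD f mf c c0).

Let mfD A : measurable A -> measurable (D `&` f @^-1` A).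
Proof. by move=> mA; apply: measurableI => //; rewrite -[X in measurable X]setTI; exact: mf. Qed.

Let mu0 : mu set0 = 0.
Proof. by rewrite /mgen preimage_set0 setI0 measure0 mule0. Qed.

Let mu_ge0 A : 0 <= mu A.
Proof.
rewrite /mgen; apply: mule_ge0; first by rewrite lee_fin.
exact: measure_ge0.
Qed.

Let mu_sigma_additive : semi_sigma_additive mu.
Proof.
move=> F mF tF mUF.
rewrite [X in X @ \oo --> _](_ : _ =
    (fun n => c%:E * \sum_(0 <= i < n) K (D `&` f @^-1` F i))); last first.
  by apply/funext => k; rewrite ge0_sume_distrr.
rewrite /mgen preimage_bigcup setI_bigcupr.
apply: cvgeZl => //; apply: measure_semi_sigma_additive.
- by move=> i; exact: mfD.
- apply/trivIsetP => i j _ _ ij; rewrite setIACA setIid -preimage_setI.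
  by move/trivIsetP : tF => /(_ i j I I ij) ->; rewrite preimage_set0 setI0.
- by rewrite -setI_bigcupr -preimage_bigcup; exact: mfD.
Qed.

HB.instance Definition _ := isMeasure.Build _ _ _ mu
  mu0 mu_ge0 mu_sigma_additive.

End Mgen.
Section PerU.
Variables (R : realType) (S : countType) (q : S -> S -> R) (nu : S -> R)
  (K : {measure set (Paths S) -> \bar R}) (hK : is_kuznetsov q nu K)
  (hq : forall x y : S, (0 <= q x y)%R).
Local Notation P := (Paths S).
Local Notation W := (@W S).
Variables (n : nat) (u : nat -> S).

Let D1 := W `&` Pre n (fun i => Some (u i)).
Let D2 := W `&` Pre 0 (fun _ => Some (u n)).
Let mD1 : measurable D1.
Proof. by apply: measurableI; [exact: W_meas|exact: Pre_meas]. Qed.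
Let mD2 : measurable D2.
Proof. by apply: measurableI; [exact: W_meas|exact: Pre_meas]. Qed.
Let p0 : (0 <= pathprod q n u)%R.
Proof. by apply: prodr_ge0 => i _; exact: hq. Qed.

Let m1 := @mgen R S K D1 mD1 (shiftp n) (shift_meas n) 1%R ler01.
Let m2 := @mgen R S K D2 mD2 id (@measurable_id _ P setT) _ p0.

Let m1E A : m1 A = K (D1 `&` shiftp n @^-1` A).
Proof. exact: mul1e. Qed.

Let KD1 : K D1 = (nu (u n))%:E * (pathprod q n u)%:E.
Proof. by rewrite /D1 (@KPre_a R S q nu K hK n _ u). Qed.

Let m1m2 A : Gs A -> m1 A = m2 A.
Proof.
rewrite m1E /m2 /mgen; case=> [->|[->|[k [b ->]]]].
- rewrite !preimage_setT !setIT KD1 /D2 (@KPre_a R S q nu K hK 0 _ (fun _ => u n)) //.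
  by rewrite /pathprod big_ord0 mule1 muleC.
- by rewrite !preimage_set0 !setI0 measure0 mule0.
- have [b0|b0] := eqVneq (b 0%N) (Some (u n)).
    have -> : D1 `&` shiftp n @^-1` Pre k b = W `&` Pre (n + k) (catb S n u b).
      apply/seteqP; split.
      + move=> w [[Ww Pw] Sw]; split => // i ik; rewrite /catb.
        case: ltnP => ni; first by rewrite Pw // ltnW.
        have := Sw (i - n)%N; rewrite /shiftp subnK //; apply; lia.
      + move=> w [Ww Pw]; split; first split => //.
          move=> i ni; rewrite Pw; last by lia.
          rewrite /catb; case: ltnP => // ni'.
          have -> : i = n by lia.
          by rewrite subnn b0.
        move=> i ik; rewrite /shiftp Pw; last by lia.
        rewrite /catb; have -> : (i + n < n)%N = false by lia.
        by rewrite addnK.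
    have -> : D2 `&` id @^-1` Pre k b = W `&` Pre k b.
      apply/seteqP; split.
      + by move=> w [[Ww Pw] Sw]; split.
      + move=> w [Ww Pw]; split => //; split => // i; rewrite leqn0 => /eqP ->.
        by rewrite Pw // b0.
    exact: (@key R S q nu K hK n u k b b0).
  have -> : D1 `&` shiftp n @^-1` Pre k b = set0.
    apply/seteqP; split => // w [[Ww Pw] Sw]; move/eqP: b0; apply.
    by rewrite -(Sw 0%N) // /shiftp add0n Pw.
  have -> : D2 `&` id @^-1` Pre k b = set0.
    apply/seteqP; split => // w [[Ww Pw] Sw]; move/eqP: b0; apply.
    by rewrite -(Sw 0%N) // Pw.
  by rewrite measure0 mule0.
Qed.

Lemma per_u A : measurable A ->
  K (W `&` Pre n (fun i => Some (u i)) `&` shiftp n @^-1` A) =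
  (pathprod q n u)%:E * K (W `&` Pre 0 (fun _ => Some (u n)) `&` A).
Proof.
move=> mA.
have cov : \bigcup_(k : nat) [set: P] = [set: P].
  by apply/seteqP; split => // w _; exists 0%N.
have fin : forall k : nat, m1 [set: P] < +oo.
  by move=> _; rewrite m1E preimage_setT setIT KD1 -EFinM ltry.
have := @measure_unique _ R P Gs (fun _ => setT) mG GsI (fun _ => or_introl erefl) cov m1 m2 m1m2 fin A mA.
move=> h; transitivity (m1 A); first by rewrite m1E.
by transitivity (m2 A); first exact: h.
Qed.

End PerU.
Section PerT.
Variables (R : realType) (S : countType) (q : S -> S -> R) (nu : S -> R)
  (K : {measure set (Paths S) -> \bar R}) (hK : is_kuznetsov q nu K)
  (hq : forall x y : S, (0 <= q x y)%R).
Local Notation P := (Paths S).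
Local Notation W := (@W S).
Variables (n : nat) (x : S) (A : set P) (mA : measurable A) (AW : A `<=` Wset (S:=S)).

Definition Et (t : 'I_n.+1 -> S) : set P :=
  [set w : P | A (shiftp n w) /\ X n w = Some x /\
     forall j : 'I_n.+1, X (n - j) w = Some (t j)].

Definition ht (t : 'I_n.+1 -> S) : \bar R :=
  if `[< t ord0 = x >] then
    (\prod_(i < n) q (t (inord i)) (t (inord i.+1)))%:E else 0.

Lemma ht_ge0 t : 0 <= ht t.
Proof.
rewrite /ht; case: ifP => // _; rewrite lee_fin; apply: prodr_ge0 => i _; exact: hq.
Qed.

Lemma Et_spec t : measurable (Et t) /\
  K (Et t) = K (A `&` [set w | X 0 w = Some x]) * ht t.
Proof.
have [tx|tx] := pselect (t ord0 = x); last first.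
  have -> : Et t = set0.
    apply/seteqP; split => // w [_ [wn /(_ ord0)]]; rewrite subn0 wn => -[]/esym.
    exact: tx.
  rewrite /ht asboolF // mule0; split; [exact: measurable0|exact: measure0].
pose u i := t (inord (n - i)).
have un : u n = x by rewrite /u subnn -tx; congr t; apply: val_inj; rewrite /= inordK.
have EE : Et t = W `&` Pre n (fun i => Some (u i)) `&` shiftp n @^-1` A.
  apply/seteqP; split.
    move=> w [Aw [wn wt]].
    have Pw : Pre n (fun i => Some (u i)) w.
      move=> i ni; have := wt (inord (n - i)); rewrite /X inordK; last by lia.
      by have -> : (n - (n - i) = i)%N by lia.
    split => //; split => //; apply: (@W_ext S n w (AW _ Aw)) => i ni; rewrite Pw //.
  move=> w [[Ww Pw] Aw]; split => //; split.
    by rewrite /X Pw // un.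
  move=> j; rewrite /X Pw; last by lia.
  rewrite /u; congr (Some (t _)); apply: val_inj; rewrite /= inordK; last by lia.
  have := ltn_ord j; lia.
split.
  rewrite EE; apply: measurableI.
    by apply: measurableI; [exact: W_meas|exact: Pre_meas].
  by rewrite -[X in measurable X]setTI; apply: shift_meas.
rewrite EE (@per_u R S q nu K hK hq n u A mA) muleC; congr (K _ * _).
  apply/seteqP; split.
    by move=> w [[Ww Pw] Aw]; split => //; rewrite /= /X Pw // un.
  move=> w [Aw w0]; split => //; split; first exact: AW.
  by move=> i; rewrite leqn0 => /eqP ->; rewrite un.
rewrite /ht asboolT //; congr (_%:E).
rewrite /pathprod -(big_mkord xpredT (fun i => q (t (inord i)) (t (inord i.+1)))).
rewrite big_rev_mkord subn0; apply: eq_bigr => i _; rewrite /u.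
have -> : ((n - i.+1).+1 = n - i)%N by have := ltn_ord i; lia.
by [].
Qed.

End PerT.
Theorem mainTheorem8 (R : realType) (S : countType) (q : S -> S -> R)
  (nu : S -> R) (K : {measure set (Paths S) -> \bar R})
  (hq : forall x y : S, (0 <= q x y)%R)
  (hG : forall x y : S, green q x y < +oo)
  (hnu : excessive q nu)
  (hK : is_kuznetsov q nu K)
  (A : set (Paths S)) (mA : measurable A) (AW : A `<=` @Wset S)
  (n : nat) (hn : (0 < n)%N) (B : set ('I_n.+1 -> S)) (x : S) :
  K [set w | A (shiftp n w) /\ X n w = Some x /\
             exists2 t, B t & forall j : 'I_n.+1, X (n - j) w = Some (t j)]
  = K (A `&` [set w | X 0 w = Some x]) * Qxn q x B.
Proof.
pose fB (t : 'I_n.+1 -> S) : nat := pickle ([ffun j => t j] : {ffun 'I_n.+1 -> S}).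
pose eB (m : nat) : 'I_n.+1 -> S :=
  if (unpickle m : option {ffun 'I_n.+1 -> S}) is Some g then (fun j => g j)
  else (fun _ => x).
have eBK t : eB (fB t) = t.
  by rewrite /eB /fB pickleK; apply: funext => j; rewrite ffunE.
pose Pn := fB @` B.
have injP : set_inj Pn eB.
  by move=> _ _ /set_mem[t1 _ <-] /set_mem[t2 _ <-]; rewrite !eBK => ->.
have BE : B = eB @` Pn.
  apply/seteqP; split => [t Bt|_ [_ [t Bt <-] <-]]; last by rewrite eBK.
  by exists (fB t); [exists t|rewrite eBK].
pose E := @Et S n x A.
have LE : [set w | A (shiftp n w) /\ X n w = Some x /\
             exists2 t, B t & forall j : 'I_n.+1, X (n - j) w = Some (t j)]
    = \bigcup_(m in Pn) E (eB m).
  apply/seteqP; split.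
    move=> w [Aw [wn [t Bt wt]]]; exists (fB t); first by exists t.
    by rewrite /E /Et eBK.
  move=> w [_ [t Bt <-]]; rewrite /E /Et eBK => -[Aw [wn wt]].
  by split => //; split => //; exists t.
have spec t := @Et_spec R S q nu K hK hq n x A mA AW t.
rewrite LE measure_bigcup; last first.
- apply/trivIsetP => i j Pi Pj ij; apply/seteqP; split => // w [[_ [_ w1]] [_ [_ w2]]].
  move/eqP: ij; apply; apply: injP; [exact/mem_set|exact/mem_set|]; apply: funext => k.
  by have := w1 k; rewrite w2 => -[].
- by move=> i _; exact: (spec (eB i)).1.
have -> : Qxn q x B = \esum_(t in eB @` Pn) ht R S q n x t by rewrite -BE.
rewrite esum_set_image; last exact: injP.
  2: by move=> i _; exact: ht_ge0.
set c := K (A `&` _).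
have mAx : measurable (A `&` [set w : Paths S | X 0 w = Some x]).
  exact: (measurableI _ _ mA (cyl_meas 0%N (Some x))).
have mD : measurable (@W S `&` Pre 0 (fun _ => Some x)).
  by apply: measurableI; [exact: W_meas|exact: Pre_meas].
have finc : c \is a fin_num.
  rewrite ge0_fin_numE; last exact: measure_ge0.
  have KD := @KPre_a R S q nu K hK 0 (fun _ => Some x) (fun _ => x) (fun _ _ => erefl).
  apply: (@le_lt_trans _ _ (K (@W S `&` Pre 0 (fun _ => Some x)))).
    apply: (le_measure K (mem_set mAx) (mem_set mD)).
    move=> w [Aw w0]; split; first exact: AW.
    by move=> i; rewrite leqn0 => /eqP ->.
  by rewrite KD -EFinM ltry.
rewrite -(fineK finc) -nneseriesZl; last by move=> i _; exact: ht_ge0.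
apply: eq_eseriesr => i _; rewrite (spec (eB i)).2 fineK //; exact: muleC.
Qed.
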